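(* Let $a<b$, let $I_n: a=x_0<x_1<\cdots<x_{n-1}<x_n=b$ be a partition of $[a,b]$, and let $h_i=x_{i+1}-x_i$ for $i=0,\dots,n-1$. Let $f:[a,b]\rightarrow\mathbb{R}$ be a differentiable mapping in $(a,b)$ such that $f'\in L^1[a,b]$ and $\gamma\le f'(x)\le \Gamma$ for all $x\in [a,b]$, where $\gamma,\Gamma$ are real constants. Define \[ S(f,I_n)=\frac{1}{2}\sum_{i=0}^{n-1}\left[f\left(\frac{3x_i+x_{i+1}}{4}\right)+f\left(\frac{x_i+3x_{i+1}}{4}\right)\right]h_i \] and $R(f,I_n)=\int_a^b f(x)\,dx-S(f,I_n)$, and let $S_i=\frac{f(x_{i+1})-f(x_i)}{h_i}$ for $i=0,\dots,n-1$. Then \[ |R(f,I_n)|\leq\frac{1}{4}\sum_{i=0}^{n-1}(S_i-\gamma)h_i^2 \qquad\text{and}\qquad |R(f,I_n)|\leq\frac{1}{4}\sum_{i=0}^{n-1}(\Gamma-S_i)h_i^2. \] *)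

(* Defs.v *)
From Stdlib Require Import Reals Lra.
From Coquelicot Require Import Coquelicot.
Open Scope R_scope.

Fixpoint sumR (n : nat) (g : nat -> R) : R :=
  match n with
  | O => 0
  | S k => sumR k g + g k
  end.

Definition hstep (x : nat -> R) (i : nat) : R := x (S i) - x i.

Definition S_rule (f : R -> R) (x : nat -> R) (n : nat) : R :=
  / 2 * sumR n (fun i =>
     (f ((3 * x i + x (S i)) / 4) + f ((x i + 3 * x (S i)) / 4)) * hstep x i).

Definition R_rem (f : R -> R) (a b : R) (x : nat -> R) (n : nat) : R :=
  RInt f a b - S_rule f x n.

Definition slope (f : R -> R) (x : nat -> R) (i : nat) : R :=
  (f (x (S i)) - f (x i)) / hstep x i.

(* Main.v *)
Require Import Defs.
From Stdlib Require Import Reals Lra Lia.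
From Coquelicot Require Import Coquelicot.
Open Scope R_scope.

Lemma ballR (x e y : R) : ball x e y <-> Rabs (y - x) < e.
Proof. split; intro H; exact H. Qed.

Lemma ballR2 (x : R) (e : posreal) (y : R) : ball x e y -> x - e < y < x + e.
Proof. intro H. change (Rabs (y - x) < e) in H. apply Rabs_def2 in H. destruct H. split; lra. Qed.

Definition clamp (a b y : R) := if Rle_dec y a then a else if Rle_dec b y then b else y.

Lemma clamp_in a b y : a < b -> a <= y <= b -> clamp a b y = y.
Proof. intros. unfold clamp. destruct Rle_dec; [lra|]. destruct Rle_dec; lra. Qed.

Lemma F_cont (a b : R) (f : R -> R) (Hab : a < b)
  (Hcont_a : filterlim f (at_right a) (locally (f a)))
  (Hcont_b : filterlim f (at_left b) (locally (f b)))
  (Hdiff : forall t : R, a < t < b -> ex_derive f t) :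
  forall t, continuous (fun y => f (clamp a b y)) t.
Proof.
  intros t.
  destruct (Rlt_le_dec a t) as [H1|H1]; destruct (Rlt_le_dec t b) as [H2|H2].
  - apply continuous_ext_loc with f.
    + assert (Hd : 0 < Rmin (t - a) (b - t)) by (apply Rmin_glb_lt; lra).
      exists (mkposreal _ Hd). intros y Hy. apply ballR2 in Hy. simpl in Hy.
      pose proof (Rmin_l (t-a) (b-t)). pose proof (Rmin_r (t-a) (b-t)).
      symmetry. f_equal. apply clamp_in; lra.
    + exact (ex_derive_continuous f t (Hdiff t (conj H1 H2))).
  -
    apply filterlim_locally. intros eps.
    destruct (Req_dec t b) as [E|E].
    + subst t. apply filterlim_locally with (eps := eps) in Hcont_b.
      destruct Hcont_b as [d Hd].
      assert (Hd' : 0 < Rmin d (b - a)) by (apply Rmin_glb_lt; [apply cond_pos|lra]).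
      exists (mkposreal _ Hd'). intros y Hy. apply ballR2 in Hy. simpl in Hy.
      pose proof (Rmin_l d (b-a)). pose proof (Rmin_r d (b-a)).
      
      rewrite (clamp_in a b b) by lra.
      destruct (Rlt_le_dec y b).
      * rewrite clamp_in by lra. apply Hd; [apply ballR; apply Rabs_def1; lra | lra].
      * unfold clamp. destruct Rle_dec; [lra|]. destruct Rle_dec; [|lra]. apply ball_center.
    + assert (Hd : 0 < t - b) by lra.
      exists (mkposreal _ Hd). intros y Hy. apply ballR2 in Hy. simpl in Hy.
      
      unfold clamp. destruct (Rle_dec y a); [lra|]. destruct (Rle_dec t a); [lra|].
      destruct (Rle_dec b y); [|lra]. destruct (Rle_dec b t); [|lra]. apply ball_center.
  -
    apply filterlim_locally. intros eps.
    destruct (Req_dec t a) as [E|E].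
    + subst t. apply filterlim_locally with (eps := eps) in Hcont_a.
      destruct Hcont_a as [d Hd].
      assert (Hd' : 0 < Rmin d (b - a)) by (apply Rmin_glb_lt; [apply cond_pos|lra]).
      exists (mkposreal _ Hd'). intros y Hy. apply ballR2 in Hy. simpl in Hy.
      pose proof (Rmin_l d (b-a)). pose proof (Rmin_r d (b-a)).
      
      rewrite (clamp_in a b a) by lra.
      destruct (Rlt_le_dec a y).
      * rewrite clamp_in by lra. apply Hd; [apply ballR; apply Rabs_def1; lra | lra].
      * unfold clamp. destruct Rle_dec; [|lra]. apply ball_center.
    + assert (Hd : 0 < a - t) by lra.
      exists (mkposreal _ Hd). intros y Hy. apply ballR2 in Hy. simpl in Hy.
      
      unfold clamp. destruct (Rle_dec y a); [|lra]. destruct (Rle_dec t a); [|lra].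
      apply ball_center.
  - lra.
Qed.

Lemma mono (a b : R) (G dG : R -> R) (Hc : forall t, continuous G t)
  (Hd : forall t, a < t < b -> is_derive G t (dG t))
  (Hpos : forall t, a < t < b -> 0 <= dG t) u v :
  a <= u -> u <= v -> v <= b -> G u <= G v.
Proof.
  intros Hu Huv Hv.
  destruct (Req_dec u v) as [E|E]; [subst; lra|].
  destruct (MVT_gen G u v (fun t => Rmax 0 (dG t))) as [c [_ Hcc]].
  - rewrite Rmin_left, Rmax_right by lra. intros t Ht.
    rewrite Rmax_right by (apply Hpos; lra). apply Hd; lra.
  - intros t _. apply continuity_pt_filterlim, Hc.
  - pose proof (Rmax_l 0 (dG c)).
    assert (0 <= Rmax 0 (dG c) * (v - u)) by (apply Rmult_le_pos; lra). lra.
Qed.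

Lemma piece (G : R -> R) (Hc : forall t, continuous G t) s t :
  s <= t -> (forall y, s <= y <= t -> G s <= G y <= G t) ->
  (t - s) * G s <= RInt G s t <= (t - s) * G t.
Proof.
  intros Hst Hm.
  assert (Hex : ex_RInt G s t) by (apply (ex_RInt_continuous (V:=R_CompleteNormedModule)); intros; apply Hc).
  split.
  - replace ((t - s) * G s) with (RInt (fun _ => G s) s t) by (rewrite RInt_const; reflexivity).
    apply RInt_le; auto. apply ex_RInt_const. intros y Hy. apply Hm; lra.
  - replace ((t - s) * G t) with (RInt (fun _ => G t) s t) by (rewrite RInt_const; reflexivity).
    apply RInt_le; auto. apply ex_RInt_const. intros y Hy. apply Hm; lra.
Qed.

Lemma chasles (G : R -> R) (Hc : forall t, continuous G t) s w t :
  RInt G s t = RInt G s w + RInt G w t.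
Proof.
  rewrite <- (RInt_Chasles (V:=R_CompleteNormedModule) G s w t); [reflexivity| |];
  apply (ex_RInt_continuous (V:=R_CompleteNormedModule)); intros; apply Hc.
Qed.

Lemma core (G : R -> R) (Hc : forall t, continuous G t) u v :
  u < v -> (forall s t, u <= s -> s <= t -> t <= v -> G s <= G t) ->
  Rabs (RInt G u v - / 2 * ((G ((3 * u + v) / 4) + G ((u + 3 * v) / 4)) * (v - u)))
   <= / 4 * ((G v - G u) * (v - u)).
Proof.
  intros Huv Hm.
  set (p := (3 * u + v) / 4). set (q := (u + 3 * v) / 4). set (w := (u + v) / 2).
  rewrite (chasles G Hc u p v), (chasles G Hc p w v), (chasles G Hc w q v).
  pose proof (piece G Hc u p ltac:(unfold p; lra) ltac:(intros; split; apply Hm; unfold p in *; lra)).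
  pose proof (piece G Hc p w ltac:(unfold p, w; lra) ltac:(intros; split; apply Hm; unfold p, w in *; lra)).
  pose proof (piece G Hc w q ltac:(unfold q, w; lra) ltac:(intros; split; apply Hm; unfold q, w in *; lra)).
  pose proof (piece G Hc q v ltac:(unfold q; lra) ltac:(intros; split; apply Hm; unfold q in *; lra)).
  assert (G u <= G p) by (apply Hm; unfold p; lra).
  assert (G p <= G w) by (apply Hm; unfold p, w; lra).
  assert (G w <= G q) by (apply Hm; unfold q, w; lra).
  assert (G q <= G v) by (apply Hm; unfold q; lra).
  assert (p - u = (v - u) / 4) by (unfold p; field).
  assert (w - p = (v - u) / 4) by (unfold p, w; field).
  assert (q - w = (v - u) / 4) by (unfold q, w; field).
  assert (v - q = (v - u) / 4) by (unfold q; field).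
  set (h := v - u) in *.
  assert (h * G p <= h * G w) by (apply Rmult_le_compat_l; lra).
  assert (h * G u <= h * G p) by (apply Rmult_le_compat_l; lra).
  assert (h * G w <= h * G q) by (apply Rmult_le_compat_l; lra).
  assert (h * G q <= h * G v) by (apply Rmult_le_compat_l; lra).
  apply Rabs_le. rewrite H7, H8, H9, H10 in *. split; nra.
Qed.

Lemma lin_cont (c : R) t : continuous (fun y : R => c * y) t.
Proof. exact (continuous_mult (fun _ : R => c) (fun y : R => y) t (continuous_const c t) (continuous_id t)). Qed.

Lemma sub_cont (F G : R -> R) t : continuous F t -> continuous G t -> continuous (fun y => F y - G y) t.
Proof. intros. exact (continuous_minus F G t H H0). Qed.

Lemma RInt_lin (c u v : R) : RInt (fun t => c * t) u v = c * (v * v - u * u) / 2.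
Proof.
  apply is_RInt_unique.
  assert (H := is_RInt_derive (V:=R_CompleteNormedModule) (fun t => c * t * t / 2) (fun t => c * t) u v).
  replace (c * (v * v - u * u) / 2) with (minus (c * v * v / 2) (c * u * u / 2)).
  - apply H.
    + intros t _. auto_derive. exact I. field.
    + intros t _. apply lin_cont.
  - change (c * v * v / 2 - c * u * u / 2 = c * (v * v - u * u) / 2). field.
Qed.

Definition Err (F : R -> R) (u v : R) :=
  RInt F u v - / 2 * ((F ((3 * u + v) / 4) + F ((u + 3 * v) / 4)) * (v - u)).

Lemma Err_G1 (F : R -> R) (Hc : forall t, continuous F t) c u v :
  Err (fun t => F t - c * t) u v = Err F u v.
Proof.
  unfold Err.
  assert (E : RInt (fun t => F t - c * t) u v = RInt F u v - RInt (fun t => c * t) u v).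
  { apply (RInt_minus (V:=R_CompleteNormedModule) F (fun t => c * t));
    apply (ex_RInt_continuous (V:=R_CompleteNormedModule)); intros; [apply Hc|apply lin_cont]. }
  rewrite E, RInt_lin. field.
Qed.

Lemma Err_G2 (F : R -> R) (Hc : forall t, continuous F t) c u v :
  Err (fun t => c * t - F t) u v = - Err F u v.
Proof.
  unfold Err.
  assert (E : RInt (fun t => c * t - F t) u v = RInt (fun t => c * t) u v - RInt F u v).
  { apply (RInt_minus (V:=R_CompleteNormedModule) (fun t => c * t) F);
    apply (ex_RInt_continuous (V:=R_CompleteNormedModule)); intros; [apply lin_cont|apply Hc]. }
  rewrite E, RInt_lin. field.
Qed.

Lemma sumR_ext n g1 g2 : (forall i, (i < n)%nat -> g1 i = g2 i) -> sumR n g1 = sumR n g2.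
Proof.
  induction n; intros H; simpl; auto.
  rewrite IHn by (intros; apply H; lia). rewrite H by lia. reflexivity.
Qed.

Lemma sumR_le n g1 g2 : (forall i, (i < n)%nat -> g1 i <= g2 i) -> sumR n g1 <= sumR n g2.
Proof.
  induction n; intros H; simpl; [lra|].
  assert (sumR n g1 <= sumR n g2) by (apply IHn; intros; apply H; lia).
  assert (g1 n <= g2 n) by (apply H; lia). lra.
Qed.

Lemma sumR_abs n g : Rabs (sumR n g) <= sumR n (fun i => Rabs (g i)).
Proof.
  induction n; simpl. rewrite Rabs_R0; lra.
  eapply Rle_trans; [apply Rabs_triang|]. lra.
Qed.

Lemma sumR_scal n c g : c * sumR n g = sumR n (fun i => c * g i).
Proof. induction n; simpl; [ring|]. rewrite <- IHn. ring. Qed.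

Lemma F_der (a b : R) (f : R -> R) (Hab : a < b)
  (Hdiff : forall t : R, a < t < b -> ex_derive f t) t :
  a < t < b -> is_derive (fun y => f (clamp a b y)) t (Derive f t).
Proof.
  intros Ht.
  apply (is_derive_ext_loc f).
  - assert (Hd : 0 < Rmin (t - a) (b - t)) by (apply Rmin_glb_lt; lra).
    exists (mkposreal _ Hd). intros y Hy. apply ballR2 in Hy. simpl in Hy.
    pose proof (Rmin_l (t-a) (b-t)). pose proof (Rmin_r (t-a) (b-t)).
    f_equal. symmetry. apply clamp_in; lra.
  - apply Derive_correct, Hdiff, Ht.
Qed.

Lemma x_mono (n : nat) (x : nat -> R) (Hxinc : forall i : nat, (i < n)%nat -> x i < x (S i)) :
  forall j i, (i <= j <= n)%nat -> x i <= x j.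
Proof.
  induction j; intros i Hij.
  - replace i with O by lia. lra.
  - destruct (Nat.eq_dec i (S j)) as [E|E]; [subst; lra|].
    assert (x i <= x j) by (apply IHj; lia).
    assert (x j < x (S j)) by (apply Hxinc; lia). lra.
Qed.

Theorem theorem3p1
  (a b : R) (n : nat) (x : nat -> R) (f : R -> R) (gamma Gamma : R)
  (Hab : a < b)
  (Hx0 : x O = a) (Hxn : x n = b)
  (Hxinc : forall i : nat, (i < n)%nat -> x i < x (S i))
  (Hcont_a : filterlim f (at_right a) (locally (f a)))
  (Hcont_b : filterlim f (at_left b) (locally (f b)))
  (Hdiff : forall t : R, a < t < b -> ex_derive f t)
  (Hbnd : forall t : R, a < t < b -> gamma <= Derive f t <= Gamma) :
  Rabs (R_rem f a b x n)
    <= / 4 * sumR n (fun i => (slope f x i - gamma) * (hstep x i) ^ 2)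
  /\
  Rabs (R_rem f a b x n)
    <= / 4 * sumR n (fun i => (Gamma - slope f x i) * (hstep x i) ^ 2).
Proof.
  set (F := fun y => f (clamp a b y)).
  assert (HFc : forall t, continuous F t) by (apply F_cont; auto).
  assert (HFd : forall t, a < t < b -> is_derive F t (Derive f t)) by (apply F_der; auto).
  assert (HFf : forall t, a <= t <= b -> F t = f t) by (intros; unfold F; f_equal; apply clamp_in; lra).
  assert (Hpos : forall i, (i <= n)%nat -> a <= x i <= b).
  { intros i Hi. rewrite <- Hx0, <- Hxn. split; apply (x_mono n x Hxinc); lia. }
  assert (HR : R_rem f a b x n = sumR n (fun i => Err F (x i) (x (S i)))).
  { unfold R_rem, S_rule.
    rewrite (RInt_ext f F) by (rewrite Rmin_left, Rmax_right by lra; intros; symmetry; apply HFf; lra).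
    rewrite (sumR_ext n _ (fun i => (F ((3 * x i + x (S i)) / 4) + F ((x i + 3 * x (S i)) / 4)) * hstep x i)).
    2:{ intros i Hi. pose proof (Hpos i ltac:(lia)). pose proof (Hpos (S i) ltac:(lia)).
        pose proof (Hxinc i Hi). rewrite !HFf by lra. reflexivity. }
    rewrite <- Hxn.
    assert (forall k, (k <= n)%nat -> RInt F a (x k) - / 2 * sumR k (fun i => (F ((3 * x i + x (S i)) / 4) + F ((x i + 3 * x (S i)) / 4)) * hstep x i) = sumR k (fun i => Err F (x i) (x (S i)))) as Hk.
    { induction k; intros Hk.
      - simpl. rewrite Hx0, RInt_point. change (0 - /2 * 0 = 0). ring.
      - simpl. rewrite (chasles F HFc a (x k) (x (S k))). rewrite <- IHk by lia.
        unfold Err, hstep. ring. }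
    apply Hk. lia. }
  rewrite HR.
  split; (eapply Rle_trans; [apply sumR_abs|]); rewrite sumR_scal; apply sumR_le; intros i Hi;
    pose proof (Hpos i ltac:(lia)); pose proof (Hpos (S i) ltac:(lia)); pose proof (Hxinc i Hi).
  - rewrite <- (Err_G1 F HFc gamma).
    set (G := fun t => F t - gamma * t).
    assert (HGc : forall t, continuous G t) by (intros; apply sub_cont; [apply HFc|apply lin_cont]).
    eapply Rle_trans; [apply core; auto|].
    + intros s t Hs Hst Ht. apply (mono a b G (fun t => Derive f t - gamma)); auto; try lra.
      * intros y Hy. apply (is_derive_minus F (fun t => gamma * t)); [apply HFd; auto|].
        auto_derive; [exact I|ring].
      * intros y Hy. pose proof (Hbnd y Hy). lra.
    + unfold G, slope, hstep. rewrite !HFf by lra. right. field. lra.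
  - replace (Rabs (Err F (x i) (x (S i)))) with (Rabs (Err (fun t => Gamma * t - F t) (x i) (x (S i))))
      by (rewrite Err_G2 by auto; apply Rabs_Ropp).
    set (G := fun t => Gamma * t - F t).
    assert (HGc : forall t, continuous G t) by (intros; apply sub_cont; [apply lin_cont|apply HFc]).
    eapply Rle_trans; [apply core; auto|].
    + intros s t Hs Hst Ht. apply (mono a b G (fun t => Gamma - Derive f t)); auto; try lra.
      * intros y Hy. apply (is_derive_minus (fun t => Gamma * t) F); [|apply HFd; auto].
        auto_derive; [exact I|ring].
      * intros y Hy. pose proof (Hbnd y Hy). lra.
    + unfold G, slope, hstep. rewrite !HFf by lra. right. field. lra.
Qed.
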